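(* For every formula $\varphi$ of propositional linear temporal logic, $\mathrm{LTL} \models \neg \Box (\varphi\leftrightarrow \bigcirc\Box\diamondsuit \neg\varphi)$.
   Context: Propositional linear temporal logic (LTL) with the ''next'' modality $\bigcirc$, ''always'' modality $\Box$ and $\diamondsuit\varphi\equiv\neg\Box\neg\varphi$, interpreted over infinite sequences of states $\mathcal{K}=(\eta_0,\eta_1,\dots)$ with $\mathcal{K}_i(\bigcirc\varphi)=\mathcal{K}_{i+1}(\varphi)$, $\mathcal{K}_i(\Box\varphi)=\mathfrak{tt}$ iff $\mathcal{K}_j(\varphi)=\mathfrak{tt}$ for all $j\ge i$. $\mathrm{LTL}\models\varphi$ means validity in all temporal structures. Here $\bigcirc$ denotes the LTL ''next'' operator. *)

(* Defs.v *)
Inductive formula : Type :=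
  | Var : nat -> formula
  | Fls : formula
  | Neg : formula -> formula
  | Imp : formula -> formula -> formula
  | Next : formula -> formula
  | Always : formula -> formula.

Definition Conj (a b : formula) : formula := Neg (Imp a (Neg b)).
Definition Iff (a b : formula) : formula := Conj (Imp a b) (Imp b a).
Definition Ev (a : formula) : formula := Neg (Always (Neg a)).

Definition state := nat -> bool.
Definition tstruct := nat -> state.

Fixpoint holds (K : tstruct) (i : nat) (f : formula) : Prop :=
  match f with
  | Var v => K i v = true
  | Fls => False
  | Neg a => ~ holds K i a
  | Imp a b => holds K i a -> holds K i b
  | Next a => holds K (S i) a
  | Always a => forall j, i <= j -> holds K j a
  end.

Definition valid (f : formula) : Prop := forall (K : tstruct) (i : nat), holds K i f.

(* Main.v *)
Require Import Defs.
From Stdlib Require Import Classical Lia.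

Lemma iff_of (A B : Prop) : ~((A -> B) -> ~(B -> A)) -> (A <-> B).
Proof. intro H. destruct (classic A), (classic B); tauto. Qed.

Theorem mainTheorem5 : forall phi : formula,
  valid (Neg (Always (Iff phi (Next (Always (Ev (Neg phi))))))).
Proof.
  intros phi K i H. simpl in H.
  assert (E : forall j, i <= j -> (holds K j phi <->
     (forall k, S j <= k -> ~ (forall l, k <= l -> ~ ~ holds K l phi)))).
  { intros j Hj. apply iff_of. exact (H j Hj). }
  destruct (classic (forall k, S i <= k -> ~ (forall l, k <= l -> ~ ~ holds K l phi))) as [C|C].
  - apply (C (S i) (le_n _)). intros l Hl Hn. apply Hn.
    apply (E l ltac:(lia)). intros k Hk. apply C. lia.
  - apply not_all_ex_not in C. destruct C as [m C].
    apply imply_to_and in C. destruct C as [Hk C]. apply NNPP in C.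
    assert (Pk : holds K m phi) by (apply NNPP; apply C; lia).
    pose proof (proj1 (E m ltac:(lia)) Pk) as Q. apply (Q (S m) (le_n _)).
    intros l Hl. apply C. lia.
Qed.
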